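(* In a synchronized communication system (possibly after some robots have left), a ring of length $2k\pi$ contains at most $k$ robots. Moreover, if no robot has left the system, a ring of length $2k\pi$ contains exactly $k$ robots.
   Context: Model. A system consists of pairwise disjoint unit circles $C_1,\dots,C_n$ in the plane (trajectories) and a communication range $r>0$. Its communication graph $G$ has vertex set $\{C_1,\dots,C_n\}$, $C_i,C_j$ adjacent iff the distance between their centres is at most $2+r$. Positions on a circle are angles (mod $2\pi$). For an edge $(i,j)$, the link position $\phi_{ij}$ is the angle of the point of $C_i$ closest to $C_j$. A schedule $F=(f,g)$ assigns each circle a starting angle $f(C_i)$ and direction $g(C_i)\in\{1,-1\}$; a robot following it on $C_i$ is at $f(C_i)+g(C_i)2\pi t$ at time $t$. $F$ is a synchronization schedule if $g(C_i)=-g(C_j)$ for adjacent circles and robots following $F$ on adjacent $C_i,C_j$ are at $\phi_{ij},\phi_{ji}$ at exactly the same times. A synchronized communication system (SCS) consists of $n$ robots, initially one per circle, following a synchronization schedule, with the switching rule: when a robot on $C_i$ reaches $\phi_{ij}$ and $C_j$ is empty, it instantly passes to $C_j$ (instantaneously) and follows the schedule of $C_j$; if $C_j$ has a robot, they meet and each stays on its circle. Robots may leave the system (possibly at different times); the remaining ones never leave. Rings. Trace a point moving along a circle $C_i$ in direction $g(C_i)$; whenever it reaches a link position $\phi_{ij}$ of its current circle, it passes to $C_j$ at $\phi_{ji}$ and continues in direction $g(C_j)$. The closed curve traced is a ring; the circles decompose into rings overlapping only at link positions. The length of a ring is the total length of the circle arcs forming it (it is a multiple of $2\pi$). A robot is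 in a ring if it lies on a point of that ring. *)

(* Defs.v *)
From mathcomp Require Import all_boot.
From mathcomp Require Import boolp.
From Stdlib Require Import Reals.

Set Implicit Arguments.
Unset Strict Implicit.
Unset Printing Implicit Defensive.
Local Open Scope R_scope.

(* A system of n unit circles C_i with centres (cx i, cy i). *)

Definition cdist (n : nat) (cx cy : 'I_n -> R) (i j : 'I_n) : R :=
  sqrt ((cx j - cx i) * (cx j - cx i) + (cy j - cy i) * (cy j - cy i))%R.

Definition disjoint_circles (n : nat) (cx cy : 'I_n -> R) : Prop :=
  forall i j : 'I_n, i <> j -> (2 < cdist cx cy i j)%R.

(* edges of the communication graph with range r *)
Definition adjacent (n : nat) (cx cy : 'I_n -> R) (r : R) (i j : 'I_n) : Prop :=
  i <> j /\ (cdist cx cy i j <= 2 + r)%R.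

Definition point (n : nat) (cx cy : 'I_n -> R) (i : 'I_n) (a : R) : R * R :=
  (cx i + cos a, cy i + sin a)%R.

(* angle a is the link position phi_ij, i.e. the point of C_i at angle a is
   the point of C_i closest to C_j (direction of the centre of C_j). *)
Definition at_link (n : nat) (cx cy : 'I_n -> R) (i j : 'I_n) (a : R) : Prop :=
  (cos a * cdist cx cy i j = cx j - cx i)%R /\
  (sin a * cdist cx cy i j = cy j - cy i)%R.

(* directions g(C_i) in {1,-1}: true = 1, false = -1 *)
Definition gsign (b : bool) : R := if b then 1%R else (-1)%R.

Definition sched (n : nat) (f : 'I_n -> R) (g : 'I_n -> bool) (i : 'I_n) (t : R) : R :=
  (f i + gsign (g i) * 2 * PI * t)%R.

Definition sync_schedule (n : nat) (cx cy : 'I_n -> R) (r : R)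
    (f : 'I_n -> R) (g : 'I_n -> bool) : Prop :=
  forall i j : 'I_n, adjacent cx cy r i j ->
    g i = ~~ g j /\
    (forall t : R, at_link cx cy i j (sched f g i t) <-> at_link cx cy j i (sched f g j t)).

(* robot q (the robot initially on C_q) is still in the system at time t;
   leave q = Some T : it leaves at time T; None : it never leaves *)
Definition present (n : nat) (leave : 'I_n -> option R) (q : 'I_n) (t : R) : Prop :=
  match leave q with None => True | Some T => (t < T)%R end.

Definition left_lim (n : nat) (p : R -> 'I_n) (t : R) (i : 'I_n) : Prop :=
  exists eps : R, (0 < eps)%R /\ forall s : R, (t - eps < s < t)%R -> p s = i.

Definition right_const (n : nat) (p : R -> 'I_n) (t : R) : Prop :=
  exists eps : R, (0 < eps)%R /\ forall s : R, (t <= s < t + eps)%R -> p s = p t.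

Definition circle_empty (n : nat) (leave : 'I_n -> option R) (pos : 'I_n -> R -> 'I_n)
    (q j : 'I_n) (t : R) : Prop :=
  forall q' : 'I_n, q' <> q -> present leave q' t -> ~ left_lim (pos q') t j.

(* pos q t = circle carrying robot q at time t (positions are right-continuous:
   at a switching instant the robot is already on the new circle).  The robot on
   C_p at time t is at angle sched f g p t. *)
Definition scs_run (n : nat) (cx cy : 'I_n -> R) (r : R) (f : 'I_n -> R)
    (g : 'I_n -> bool) (leave : 'I_n -> option R) (pos : 'I_n -> R -> 'I_n) : Prop :=
  (forall q : 'I_n, pos q 0%R = q) /\
  (forall (q : 'I_n) (t : R), (0 <= t)%R -> present leave q t -> right_const (pos q) t) /\
  (forall (q : 'I_n) (t : R), (0 < t)%R -> present leave q t ->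
     exists i : 'I_n, left_lim (pos q) t i /\
       ((exists j : 'I_n, adjacent cx cy r i j /\ at_link cx cy i j (sched f g i t) /\
            circle_empty leave pos q j t /\ pos q t = j) \/
        ((forall j : 'I_n, adjacent cx cy r i j -> at_link cx cy i j (sched f g i t) ->
            ~ circle_empty leave pos q j t) /\ pos q t = i))).

(* Tracing a ring from the point of C_i0 at angle sched f g i0 tau0 (every point
   of every circle has this form): c s is the circle of the traced point after
   tracing time s; the traced point moves like a schedule robot, so its angle at
   tracing time s is sched f g (c s) (tau0 + s); it always switches at link
   positions (right-continuous convention). *)
Definition trace_path (n : nat) (cx cy : 'I_n -> R) (r : R) (f : 'I_n -> R)
    (g : 'I_n -> bool) (i0 : 'I_n) (tau0 : R) (c : R -> 'I_n) : Prop :=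
  c 0%R = i0 /\
  (forall s : R, (0 <= s)%R -> right_const c s) /\
  (forall s : R, (0 < s)%R ->
     exists i : 'I_n, left_lim c s i /\
       ((exists j : 'I_n, adjacent cx cy r i j /\ at_link cx cy i j (sched f g i (tau0 + s)) /\
            c s = j) \/
        ((forall j : 'I_n, adjacent cx cy r i j -> ~ at_link cx cy i j (sched f g i (tau0 + s))) /\
            c s = i))).

Definition trace_point (n : nat) (cx cy : 'I_n -> R) (f : 'I_n -> R) (g : 'I_n -> bool)
    (tau0 : R) (c : R -> 'I_n) (s : R) : R * R :=
  point cx cy (c s) (sched f g (c s) (tau0 + s)%R).

(* the traced ring has length 2 k pi: the traced curve (speed 2 pi) first closes up
   after tracing time k *)
Definition ring_length_is (n : nat) (cx cy : 'I_n -> R) (f : 'I_n -> R) (g : 'I_n -> bool)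
    (tau0 : R) (c : R -> 'I_n) (k : nat) : Prop :=
  (0 < k)%nat /\
  trace_point cx cy f g tau0 c (INR k) = trace_point cx cy f g tau0 c 0%R /\
  (forall s : R, (0 < s < INR k)%R ->
     trace_point cx cy f g tau0 c s <> trace_point cx cy f g tau0 c 0%R).

Definition robot_in_ring (n : nat) (cx cy : 'I_n -> R) (f : 'I_n -> R) (g : 'I_n -> bool)
    (leave : 'I_n -> option R) (pos : 'I_n -> R -> 'I_n)
    (tau0 : R) (c : R -> 'I_n) (q : 'I_n) (t : R) : Prop :=
  present leave q t /\
  exists s : R, (0 <= s)%R /\
    trace_point cx cy f g tau0 c s = point cx cy (pos q t) (sched f g (pos q t) t).

(* Main.v *)
Require Import Defs.
From mathcomp Require Import all_boot.
From mathcomp Require Import boolp.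
From Stdlib Require Import Reals Lra Lia Psatz Classical.
Local Open Scope R_scope.

Lemma cs_perZ (y : R) (z : Z) :
  cos (y + 2 * PI * IZR z) = cos y /\ sin (y + 2 * PI * IZR z) = sin y.
Proof.
destruct (Z.le_gt_cases 0 z) as [Hz|Hz].
- rewrite -(Znat.Z2Nat.id z Hz) -INR_IZR_INZ.
  replace (y + 2 * PI * INR (Z.to_nat z)) with (y + 2 * INR (Z.to_nat z) * PI) by ring.
  split; [apply cos_period | apply sin_period].
- assert (Hz' : (0 <= - z)%Z) by lia.
  replace z with (- Z.of_nat (Z.to_nat (- z)))%Z by lia.
  rewrite opp_IZR -INR_IZR_INZ.
  remember (INR (Z.to_nat (- z))) as N eqn:HN.
  rewrite -(cos_period (y + 2 * PI * - N) (Z.to_nat (-z))).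
  rewrite -(sin_period (y + 2 * PI * - N) (Z.to_nat (-z))).
  rewrite -HN. split; f_equal; ring.
Qed.

Lemma cs_eq_angle (a b : R) : cos a = cos b -> sin a = sin b ->
  exists m : Z, a = b + 2 * PI * IZR m.
Proof.
intros Hc Hs.
assert (H0 : sin (a - b) = 0).
{ rewrite sin_minus Hc Hs; ring. }
assert (H1 : cos (a - b) = 1).
{ rewrite cos_minus Hc Hs Rplus_comm. apply sin2_cos2. }
destruct (sin_eq_0_0 _ H0) as [k Hk].
destruct (Z.Even_or_Odd k) as [[m Hm]|[m Hm]]; subst k.
- exists m. rewrite mult_IZR in Hk. lra.
- exfalso. rewrite plus_IZR mult_IZR in Hk.
  rewrite Hk in H1.
  replace ((2 * IZR m + 1) * PI) with (PI + 2 * PI * IZR m) in H1 by ring.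
  rewrite (proj1 (cs_perZ PI m)) cos_PI in H1. lra.
Qed.
Lemma sched_shift (n : nat) (f : 'I_n -> R) (g : 'I_n -> bool) (i : 'I_n) (x : R) (m : Z) :
  sched f g i (x + IZR m) = sched f g i x + 2 * PI * IZR (if g i then m else (- m)%Z).
Proof. rewrite /sched /gsign; case: (g i); rewrite ?opp_IZR; ring. Qed.

Lemma at_link_per (n : nat) (cx cy : 'I_n -> R) (i j : 'I_n) (a : R) (z : Z) :
  at_link cx cy i j (a + 2 * PI * IZR z) <-> at_link cx cy i j a.
Proof. rewrite /at_link. by rewrite (proj1 (cs_perZ a z)) (proj2 (cs_perZ a z)). Qed.

Lemma point_per (n : nat) (cx cy : 'I_n -> R) (i : 'I_n) (a : R) (z : Z) :
  point cx cy i (a + 2 * PI * IZR z) = point cx cy i a.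
Proof. rewrite /point. by rewrite (proj1 (cs_perZ a z)) (proj2 (cs_perZ a z)). Qed.

Lemma cdist_sym (n : nat) (cx cy : 'I_n -> R) i j : cdist cx cy i j = cdist cx cy j i.
Proof. rewrite /cdist; f_equal; ring. Qed.

Lemma adjacent_sym (n : nat) (cx cy : 'I_n -> R) r i j :
  adjacent cx cy r i j -> adjacent cx cy r j i.
Proof. move=> [H1 H2]; split; [by auto | by rewrite cdist_sym]. Qed.

Lemma pt_eq (n : nat) (cx cy : 'I_n -> R) i j a b :
  disjoint_circles cx cy -> point cx cy i a = point cx cy j b ->
  i = j /\ cos a = cos b /\ sin a = sin b.
Proof.
move=> Hd [Hx Hy].
case: (classic (i = j)) => [Hij|Hij].
- subst j; split; [by [] | split; lra].
- exfalso. have H := Hd _ _ Hij.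
  move: H; rewrite /cdist.
  have -> : cx j - cx i = cos a - cos b by lra.
  have -> : cy j - cy i = sin a - sin b by lra.
  move=> H.
  have Ha := sin2_cos2 a. have Hb := sin2_cos2 b.
  rewrite /Rsqr in Ha Hb.
  have H4 : (cos a - cos b) * (cos a - cos b) + (sin a - sin b) * (sin a - sin b) <= 4.
    have := pow2_ge_0 (cos a + cos b); have := pow2_ge_0 (sin a + sin b). nra.
  have : sqrt ((cos a - cos b) * (cos a - cos b) + (sin a - sin b) * (sin a - sin b)) <= sqrt 4.
    by apply sqrt_le_1_alt.
  have -> : 4 = Rsqr 2 by rewrite /Rsqr; ring.
  rewrite sqrt_Rsqr; lra.
Qed.

Lemma two_links (n : nat) (cx cy : 'I_n -> R) r f g (j i i' : 'I_n) a :
  0 < r -> disjoint_circles cx cy -> sync_schedule cx cy r f g ->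
  adjacent cx cy r j i -> adjacent cx cy r j i' ->
  at_link cx cy j i a -> at_link cx cy j i' a -> i = i'.
Proof.
move=> Hr Hd Hs Ha1 Ha2 [L1 L2] [L3 L4].
case: (classic (i = i')) => [//|Hne]; exfalso.
have G1 := proj1 (Hs _ _ Ha1). have G2 := proj1 (Hs _ _ Ha2).
have Hadj : adjacent cx cy r i i'.
  split; first by [].
  move: Ha1 Ha2 => [Hn1 D1] [Hn2 D2].
  have E1 := Hd _ _ Hn1. have E2 := Hd _ _ Hn2.
  move: L1 L2 L3 L4 D1 D2 E1 E2.
  set d1 := cdist cx cy j i. set d2 := cdist cx cy j i'.
  move=> L1 L2 L3 L4 D1 D2 E1 E2.
  rewrite /cdist.
  have -> : cx i' - cx i = cos a * (d2 - d1) by lra.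
  have -> : cy i' - cy i = sin a * (d2 - d1) by lra.
  have -> : cos a * (d2 - d1) * (cos a * (d2 - d1)) + sin a * (d2 - d1) * (sin a * (d2 - d1))
     = Rsqr (d2 - d1).
    have := sin2_cos2 a; rewrite /Rsqr => H.
    transitivity ((sin a * sin a + cos a * cos a) * ((d2 - d1) * (d2 - d1))); [ring | rewrite H; ring].
  rewrite sqrt_Rsqr_abs. apply Rabs_le; lra.
have := proj1 (Hs _ _ Hadj).
move: G1 G2; case: (g j); case: (g i); case: (g i') => //=.
Qed.

Lemma cont_ind (good : R -> Prop) :
  good 0 ->
  (forall tau, 0 < tau -> (forall u, 0 <= u < tau -> good u) -> good tau) ->
  (forall tau, 0 <= tau -> good tau ->
     exists e, 0 < e /\ forall u, tau <= u < tau + e -> good u) ->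
  forall t, 0 <= t -> good t.
Proof.
move=> G0 GL GR t Ht.
case: (classic (good t)) => [//|Hb]; exfalso.
pose E := fun s => 0 <= s /\ forall u, 0 <= u <= s -> good u.
have HB : bound E.
  exists t => s [Hs Hu].
  case: (Rle_lt_dec s t) => [//|Hlt]. exfalso; apply: Hb; apply: Hu; lra.
have HE : exists x, E x.
  exists 0; split; [lra|] => u Hu. have -> : u = 0 by lra. exact G0.
case: (completeness E HB HE) => tau [Hub Hlub].
have Htau0 : 0 <= tau by apply: Hub; split; [lra|] => u Hu; have -> : u = 0 by lra.
have Hbef : forall u, 0 <= u < tau -> good u.
  move=> u Hu. case: (classic (good u)) => [//|Hnu]; exfalso.
  have : tau <= u.
    apply: Hlub => s [Hs Hsu].
    case: (Rle_lt_dec s u) => [//|Hlt]. exfalso; apply: Hnu; apply: Hsu; lra.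
  lra.
have Gt : good tau.
  case: (Rle_lt_or_eq_dec 0 tau Htau0) => [Hlt|Heq].
  - exact: GL.
  - by rewrite -Heq.
case: (GR tau Htau0 Gt) => e [He He'].
have : E (tau + e / 2).
  split; [lra|] => u Hu.
  case: (Rlt_le_dec u tau) => Hut; [apply: Hbef; lra | apply: He'; lra].
move/Hub; lra.
Qed.

Lemma present_mono (n : nat) (leave : 'I_n -> option R) q u v :
  present leave q u -> v <= u -> present leave q v.
Proof. rewrite /present; case: (leave q) => // T; lra. Qed.
Arguments present_mono {n leave q u v}.

Lemma pick_before (tau e1 e2 : R) : 0 < tau -> 0 < e1 -> 0 < e2 ->
  exists u, 0 <= u < tau /\ tau - e1 < u < tau /\ tau - e2 < u < tau.
Proof.
move=> Ht H1 H2. exists (Rmax (tau / 2) (tau - Rmin e1 e2 / 2)).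
have := Rmax_l (tau / 2) (tau - Rmin e1 e2 / 2).
have := Rmax_r (tau / 2) (tau - Rmin e1 e2 / 2).
have := Rmin_l e1 e2. have := Rmin_r e1 e2.
have : 0 < Rmin e1 e2 by apply Rmin_pos.
have : Rmax (tau / 2) (tau - Rmin e1 e2 / 2) < tau.
  apply Rmax_lub_lt; have := Rmin_pos e1 e2 H1 H2; lra.
lra.
Qed.

Lemma pos_inj (n : nat) (cx cy : 'I_n -> R) r f g leave pos :
  0 < r -> disjoint_circles cx cy -> sync_schedule cx cy r f g ->
  scs_run cx cy r f g leave pos ->
  forall q q' t, q <> q' -> 0 <= t -> present leave q t -> present leave q' t ->
  pos q t <> pos q' t.
Proof.
move=> Hr Hd Hs [H0 [HR HL]] q q' t Hne Ht.
pose good := fun u => present leave q u -> present leave q' u -> pos q u <> pos q' u.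
apply: (cont_ind good _ _ _ t Ht).
- by rewrite /good H0 H0.
- move=> tau Htau IH Pq Pq' Heq.
  case: (HL q tau Htau Pq) => i [[e1 [He1 L1]] C1].
  case: (HL q' tau Htau Pq') => i' [[e2 [He2 L2]] C2].
  have Hii : i <> i'.
    move=> Eii; subst i'.
    case: (pick_before tau e1 e2 Htau He1 He2) => u [Hu [Hu1 Hu2]].
    apply: (IH u Hu).
    + apply: (present_mono Pq); lra.
    + apply: (present_mono Pq'); lra.
    + by rewrite (L1 u Hu1) (L2 u Hu2).
  case: C1 => [[j [Aj [Lj [Ej Pj]]]]|[_ Pi]];
  case: C2 => [[j' [Aj' [Lj' [Ej' Pj']]]]|[_ Pi']].
  + have Ejj : j = j' by rewrite -Pj -Pj' Heq.
    rewrite -Ejj in Aj' Lj'.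
    apply: Hii.
    apply: (@two_links n cx cy r f g j i i' (sched f g j tau) Hr Hd Hs).
    * apply: adjacent_sym; exact: Aj.
    * apply: adjacent_sym; exact: Aj'.
    * by apply (proj2 (Hs _ _ Aj)).
    * by apply (proj2 (Hs _ _ Aj')).
  +
    have Eij : i' = j by rewrite -Pi' -Heq Pj.
    apply: (Ej q') => //.
    * by move=> E; apply: Hne.
    * by rewrite -Eij; exists e2; split.
  + have Eij : i = j' by rewrite -Pi Heq Pj'.
    apply: (Ej' q) => //.
    * by rewrite -Eij; exists e1; split.
  + by apply: Hii; rewrite -Pi -Pi' Heq.
- move=> tau Htau G.
  case: (classic (present leave q tau /\ present leave q' tau)) => [[Pq Pq']|Hnp].
  + case: (HR q tau Htau Pq) => e1 [He1 R1].
    case: (HR q' tau Htau Pq') => e2 [He2 R2].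
    exists (Rmin e1 e2); split; first exact: Rmin_pos.
    move=> u Hu _ _.
    have := Rmin_l e1 e2; have := Rmin_r e1 e2 => M2 M1.
    rewrite (R1 u) ?(R2 u); [exact: G | lra | lra].
  + exists 1; split; first lra.
    move=> u Hu Pq Pq'; exfalso; apply: Hnp; split.
    * apply: (present_mono Pq); lra.
    * apply: (present_mono Pq'); lra.
Qed.

Lemma trace_shift (n : nat) (cx cy : 'I_n -> R) r f g i0 tau0 c :
  0 < r -> disjoint_circles cx cy -> sync_schedule cx cy r f g ->
  trace_path cx cy r f g i0 tau0 c ->
  forall a b (m : Z), 0 <= a -> 0 <= b -> b = a + IZR m -> c a = c b ->
  forall u, 0 <= u -> c (a + u) = c (b + u).
Proof.
move=> Hr Hd Hs [T0 [TR TL]] a b m Ha Hb Hab Hc.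
apply: (cont_ind (fun u => c (a + u) = c (b + u))).
- by rewrite !Rplus_0_r.
- move=> tau Htau IH.
  case: (TL (a + tau) ltac:(lra)) => i1 [[e1 [He1 L1]] C1].
  case: (TL (b + tau) ltac:(lra)) => i2 [[e2 [He2 L2]] C2].
  have Ei : i1 = i2.
    case: (pick_before tau e1 e2 Htau He1 He2) => u [Hu [Hu1 Hu2]].
    rewrite -(L1 (a + u)); last lra.
    rewrite -(L2 (b + u)); last lra.
    exact: IH.
  rewrite -Ei in C2 => {Ei L2}.
  have Lk : forall j, at_link cx cy i1 j (sched f g i1 (tau0 + (b + tau))) <->
                      at_link cx cy i1 j (sched f g i1 (tau0 + (a + tau))).
    move=> j.
    have -> : tau0 + (b + tau) = (tau0 + (a + tau)) + IZR m by rewrite Hab; ring.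
    by rewrite sched_shift at_link_per.
  case: C1 => [[j1 [A1 [K1 P1]]]|[N1 P1]];
  case: C2 => [[j2 [A2 [K2 P2]]]|[N2 P2]].
  + rewrite P1 P2.
    apply: (@two_links n cx cy r f g i1 j1 j2 (sched f g i1 (tau0 + (a + tau))) Hr Hd Hs) => //.
    by apply/Lk.
  + by exfalso; apply: (N2 j1 A1); apply/Lk.
  + by exfalso; apply: (N1 j2 A2); apply/Lk.
  + by rewrite P1 P2.
- move=> tau Htau G.
  case: (TR (a + tau) ltac:(lra)) => e1 [He1 R1].
  case: (TR (b + tau) ltac:(lra)) => e2 [He2 R2].
  exists (Rmin e1 e2); split; first exact: Rmin_pos.
  move=> u Hu.
  have := Rmin_l e1 e2; have := Rmin_r e1 e2 => M2 M1.
  rewrite (R1 (a + u)) ?(R2 (b + u)); [exact: G | lra | lra].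
Qed.

Lemma tp_in (n : nat) (cx cy : 'I_n -> R) f g (c : R -> 'I_n) tau0 s j t :
  disjoint_circles cx cy ->
  point cx cy (c s) (sched f g (c s) (tau0 + s)) = point cx cy j (sched f g j t) ->
  c s = j /\ exists m : Z, s = t - tau0 + IZR m.
Proof.
move=> Hd Hp. case: (pt_eq _ _ _ _ _ _ _ Hd Hp) => Ec [Hc Hs]. split => //.
case: (cs_eq_angle _ _ Hc Hs) => m Hm.
rewrite Ec /sched /gsign in Hm.
have HP := PI_RGT_0.
case: (g j) Hm => Hm.
- exists m. apply (Rmult_eq_reg_l (2 * PI)); [| lra]. nra.
- exists (- m)%Z. rewrite opp_IZR. apply (Rmult_eq_reg_l (2 * PI)); [| lra]. nra.
Qed.

Lemma tp_back (n : nat) (cx cy : 'I_n -> R) f g (c : R -> 'I_n) tau0 s j t (m : Z) :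
  c s = j -> s = t - tau0 + IZR m ->
  point cx cy (c s) (sched f g (c s) (tau0 + s)) = point cx cy j (sched f g j t).
Proof.
move=> Ec Es. rewrite Ec.
have -> : tau0 + s = t + IZR m by rewrite Es; ring.
by rewrite sched_shift point_per.
Qed.

Arguments trace_shift {n cx cy r f g i0 tau0 c}.
Arguments pos_inj {n cx cy r f g leave pos}.

Close Scope R_scope.

Theorem lemma10 (n : nat) (cx cy : 'I_n -> R) (r : R)
    (f : 'I_n -> R) (g : 'I_n -> bool)
    (leave : 'I_n -> option R) (pos : 'I_n -> R -> 'I_n)
    (i0 : 'I_n) (tau0 : R) (c : R -> 'I_n) (k : nat) (t : R) :
  (0 < r)%R ->
  disjoint_circles cx cy ->
  sync_schedule cx cy r f g ->
  scs_run cx cy r f g leave pos ->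
  trace_path cx cy r f g i0 tau0 c ->
  ring_length_is cx cy f g tau0 c k ->
  (0 <= t)%R ->
  (#|[set q : 'I_n | `[< robot_in_ring cx cy f g leave pos tau0 c q t >]]| <= k)%N /\
  ((forall q : 'I_n, leave q = None) ->
     #|[set q : 'I_n | `[< robot_in_ring cx cy f g leave pos tau0 c q t >]]| = k).
Proof.
Open Scope R_scope.
move=> Hr Hd Hs Hrun Htp [Hk [Hclose Hfirst]] Ht.
have Hkpos := Hk.
set x := t - tau0.
pose J : {set 'I_n} :=
  [set j | `[< exists s, 0 <= s /\ c s = j /\ exists m : Z, s = x + IZR m >]].
have HA : forall q, robot_in_ring cx cy f g leave pos tau0 c q t <->
                    present leave q t /\ pos q t \in J.
  move=> q; split.
  - move=> [Pq [s [Hs0 Hp]]]. split => //. rewrite inE; apply/asboolP.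
    case: (tp_in _ _ _ _ _ _ _ _ _ _ Hd Hp) => Ec [m Hm].
    by exists s; split => //; split => //; exists m.
  - move=> [Pq]; rewrite inE => /asboolP [s [Hs0 [Ec [m Hm]]]].
    split => //. exists s; split => //. exact: (tp_back _ _ _ _ _ _ _ _ _ _ m Ec Hm).
have Ck0 : c (INR k) = c 0.
  by case: (pt_eq _ _ _ _ _ _ _ Hd Hclose).
have Per1 : forall u, 0 <= u -> c u = c (INR k + u).
  move=> u Hu.
  have H1 : INR k = 0 + IZR (Z.of_nat k) by rewrite -INR_IZR_INZ; ring.
  have := trace_shift Hr Hd Hs Htp 0 (INR k) (Z.of_nat k) (Rle_refl 0) (pos_INR k) H1 (esym Ck0) u Hu.
  by rewrite Rplus_0_l.
have Per : forall M u, 0 <= u -> c (INR M * INR k + u) = c u.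
  elim => [|M IH] u Hu.
  - by rewrite /= Rmult_0_l Rplus_0_l.
  - rewrite S_INR.
    have -> : (INR M + 1) * INR k + u = INR k + (INR M * INR k + u) by ring.
    rewrite -Per1; first exact: IH.
    have := pos_INR M; have := pos_INR k; nra.
have [Hup1 Hup2] := archimed x.
set s0 := x - IZR (up x) + 1.
have Hs0 : 0 <= s0 < 1 by rewrite /s0; lra.
pose F := fun m : 'I_k => c (s0 + INR m).
have key : forall a b : 'I_k, (a < b)%nat -> F a <> F b.
  move=> a b Hlt Hab.
  set p := (b - a)%nat.
  have Hp : INR p = INR b - INR a.
    rewrite /p minus_INR //. apply/leP. by apply ltnW.
  have Hak : INR a + 1 <= INR k.
    rewrite -S_INR; apply le_INR; apply/leP; exact: ltn_ord.
  have Hbk : INR b < INR k by apply lt_INR; apply/ltP; exact: ltn_ord.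
  have Hab' : INR a < INR b by apply lt_INR; apply/ltP.
  have Hsh := trace_shift Hr Hd Hs Htp (s0 + INR a) (s0 + INR b) (Z.of_nat p) ltac:(have := pos_INR a; lra) ltac:(have := pos_INR b; lra) ltac:(rewrite -INR_IZR_INZ Hp; ring) Hab (INR k - s0 - INR a) ltac:(lra).
  have E1 : s0 + INR a + (INR k - s0 - INR a) = INR k by ring.
  have E2 : s0 + INR b + (INR k - s0 - INR a) = INR k + INR p by rewrite Hp; ring.
  rewrite E1 E2 Ck0 -Per1 in Hsh; last exact: pos_INR.
  apply: (Hfirst (INR p)); first by have := pos_INR a; lra.
  rewrite /trace_point -Hsh.
  have -> : tau0 + INR p = (tau0 + 0) + IZR (Z.of_nat p) by rewrite -INR_IZR_INZ; ring.
  by rewrite sched_shift point_per.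
have Finj : injective F.
  move=> a b Hab. apply: ord_inj.
  case: (ltngtP a b) => // H; exfalso.
  - exact: (key a b H Hab).
  - exact: (key b a H (esym Hab)).
have HJ : J = F @: [set: 'I_k].
  apply/setP => j. apply/idP/idP.
  - rewrite inE => /asboolP [s [Hs1 [Ec [m Hm]]]].
    set N := (m + up x - 1)%Z.
    have HN : IZR N = s - s0 by rewrite /N minus_IZR plus_IZR /s0; lra.
    have HN0 : (0 <= N)%Z.
      have : (-1 < N)%Z by apply lt_IZR; rewrite HN; lra.
      lia.
    set M := Z.to_nat N.
    have HM : INR M = s - s0 by rewrite /M INR_IZR_INZ Znat.Z2Nat.id.
    apply/imsetP. exists (Ordinal (ltn_pmod M Hkpos)); first by rewrite inE.
    rewrite /F /= -Ec.
    have -> : s = INR (M %/ k) * INR k + (s0 + INR (M %% k)).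
      have Hdiv : INR M = INR (M %/ k) * INR k + INR (M %% k).
        by rewrite {1}(divn_eq M k) -mult_INR -plus_INR.
      lra.
    apply: Per. have := pos_INR (M %% k); lra.
  - move/imsetP => [m _ ->].
    rewrite inE; apply/asboolP.
    exists (s0 + INR m); split; first by have := pos_INR m; lra.
    split => //. exists (Z.of_nat m - up x + 1)%Z.
    rewrite plus_IZR minus_IZR -INR_IZR_INZ /s0; ring.
have HcardJ : #|J| = k by rewrite HJ card_imset // cardsT card_ord.
set A := [set q : 'I_n | `[< robot_in_ring cx cy f g leave pos tau0 c q t >]].
have HA1 : forall q, q \in A -> present leave q t /\ pos q t \in J.
  by move=> q; rewrite inE => /asboolP /HA.
have injA : {in A &, injective (fun q => pos q t)}.
  move=> q q' /HA1 [Pq _] /HA1 [Pq' _] E.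
  apply: NNPP => Hne; exact: (pos_inj Hr Hd Hs Hrun q q' t Hne Ht Pq Pq' E).
have sub : (fun q => pos q t) @: A \subset J.
  apply/subsetP => j /imsetP [q qA ->]. by case: (HA1 q qA).
split.
- rewrite -(card_in_imset injA) -HcardJ. exact: subset_leq_card sub.
- move=> Hall.
  have Hpr : forall q, present leave q t by move=> q; rewrite /present Hall.
  have -> : A = (fun q => pos q t) @^-1: J.
    apply/setP => q. apply/idP/idP.
    + by move/HA1 => [_ H]; rewrite inE.
    + rewrite inE => H. rewrite inE; apply/asboolP/HA; split => //.
  rewrite card_preimset // => q q' E.
  apply: NNPP => Hne; exact: (pos_inj Hr Hd Hs Hrun q q' t Hne Ht (Hpr q) (Hpr q') E).
Qed.
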